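(* The subalgebra of $U^+$ generated by $e_2,w,e_3$ and the subalgebra of $U^+$ generated by $e_1,\overline{e_3},\overline w$ are not isomorphic as $\Bbbk$-algebras.
   Context: $\Bbbk$ is an algebraically closed field of characteristic zero and $q\in\Bbbk^\times$ is not a root of unity. $U^+$ is the $\Bbbk$-algebra generated by $e_1,e_2$ with relations (S1) $e_1^2e_2-(q^2+q^{-2})e_1e_2e_1+e_2e_1^2=0$ and (S2) $e_2^3e_1-(q^2+1+q^{-2})e_2^2e_1e_2+(q^2+1+q^{-2})e_2e_1e_2^2-e_1e_2^3=0$. Set $e_3=e_1e_2-q^2e_2e_1$, $w=e_2e_3-e_3e_2$, $\overline{e_3}=e_1e_2-q^{-2}e_2e_1$, $\overline w=e_2\overline{e_3}-\overline{e_3}e_2$. *)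

(* Defs.v *)
From HB Require Import structures.
From mathcomp Require Import all_boot all_order all_algebra.
Set Implicit Arguments. Unset Strict Implicit. Unset Printing Implicit Defensive.
Import GRing.Theory.
Local Open Scope ring_scope.

Section Defs.
Variable k : fieldType.

Definition serre_rel (q : k) (B : algType k) (x y : B) : Prop :=
  x * x * y - (q ^+ 2 + q ^- 2) *: (x * y * x) + y * x * x = 0 /\
  y * y * y * x - (q ^+ 2 + 1 + q ^- 2) *: (y * y * x * y)
    + (q ^+ 2 + 1 + q ^- 2) *: (y * x * y * y) - x * y * y * y = 0.

(* (A, e1, e2) is the k-algebra presented by generators e1, e2 and
   relations (S1), (S2): universal property of the presentation. *)
Definition is_Uplus (q : k) (A : algType k) (e1 e2 : A) : Prop :=
  serre_rel q e1 e2 /\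
  forall (B : algType k) (b1 b2 : B), serre_rel q b1 b2 ->
    (exists f : {lrmorphism A -> B}, f e1 = b1 /\ f e2 = b2) /\
    (forall f g : {lrmorphism A -> B}, f e1 = g e1 -> f e2 = g e2 -> f =1 g).

Definition e3 (q : k) (A : algType k) (e1 e2 : A) : A := e1 * e2 - q ^+ 2 *: (e2 * e1).
Definition wq (q : k) (A : algType k) (e1 e2 : A) : A :=
  e2 * e3 q e1 e2 - e3 q e1 e2 * e2.
Definition e3bar (q : k) (A : algType k) (e1 e2 : A) : A := e1 * e2 - q ^- 2 *: (e2 * e1).
Definition wbar (q : k) (A : algType k) (e1 e2 : A) : A :=
  e2 * e3bar q e1 e2 - e3bar q e1 e2 * e2.

Definition in_gen_subalg (A : algType k) (gens : seq A) (x : A) : Prop :=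
  forall P : {pred A}, subalg_closed P -> {subset gens <= P} -> x \in P.

Definition subalg_iso (A : algType k) (S T : A -> Prop) : Prop :=
  exists f : A -> A,
    (forall x, S x -> T (f x)) /\
    (forall x y, S x -> S y -> f x = f y -> x = y) /\
    (forall y, T y -> exists2 x, S x & f x = y) /\
    f 1 = 1 /\
    (forall a x y, S x -> S y -> f (a *: x + y) = a *: f x + f y) /\
    (forall x y, S x -> S y -> f (x * y) = f x * f y).
End Defs.

(* Main.v *)
Require Import Defs.
From HB Require Import structures.
From mathcomp Require Import all_boot all_order all_algebra.
From mathcomp Require Import ring.
From Stdlib Require ClassicalEpsilon.
Import GRing.Theory.
Local Open Scope ring_scope.

Section M.
Variable k : fieldType.
Definition o0 : 'I_4 := @Ordinal 4 0 isT.
Definition o1 : 'I_4 := @Ordinal 4 1 isT.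
Definition o2 : 'I_4 := @Ordinal 4 2 isT.
Definition o3 : 'I_4 := @Ordinal 4 3 isT.
Definition M1 : 'M[k]_4 := delta_mx o0 o1.
Definition M2 : 'M[k]_4 := delta_mx o1 o2 - delta_mx o2 o3.

Lemma dd (i j l m : 'I_4) : (delta_mx i j : 'M[k]_4) * delta_mx l m = delta_mx i m *+ (j == l).
Proof. by rewrite -mulmxE mul_delta_mx_cond. Qed.

Lemma M2M1 : M2 * M1 = 0.
Proof. by rewrite /M2 /M1 mulrBl !dd /= subrr. Qed.
Lemma M1M1 : M1 * M1 = 0.
Proof. by rewrite /M1 dd. Qed.
Lemma M1M2 : M1 * M2 = delta_mx o0 o2.
Proof. by rewrite /M2 /M1 mulrBr !dd /= subr0. Qed.
Lemma M2M2 : M2 * M2 = - delta_mx o1 o3.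
Proof. by rewrite /M2 mulrBr !mulrBl !dd /= !subr0 sub0r. Qed.
Lemma M2M2M2 : M2 * M2 * M2 = 0.
Proof. by rewrite M2M2 /M2 mulNr mulrBr !dd /= subrr oppr0. Qed.

Lemma serreM (q : k) : serre_rel q M1 M2.
Proof.
have h1 : M1 * M2 * M1 = 0 by rewrite M1M2 /M1 dd.
split.
  by rewrite M1M1 h1 M2M1 !(mul0r, mulr0, scaler0, subrr, addr0, subr0, add0r, oppr0).
have h2 : M2 * M2 * M1 = 0 by rewrite -mulrA M2M1 mulr0.
have h3 : M1 * M2 * M2 * M2 = 0 by rewrite -!mulrA [M2 * (M2 * M2)]mulrA M2M2M2 mulr0.
rewrite M2M2M2 h2 h3 M2M1. rewrite !(mul0r, mulr0, scaler0, subrr, addr0, subr0, add0r, oppr0). done.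
Qed.

Definition inD (M : 'M[k]_4) : bool :=
  [forall i : 'I_4, forall j : 'I_4, (i != o0) ==> (M i j == (i == j)%:R * M o0 o0)].

Lemma inDP (M : 'M[k]_4) : reflect (forall i j, i != o0 -> M i j = (i == j)%:R * M o0 o0) (inD M).
Proof.
apply: (iffP forallP) => [H i j /negbTE Hi| H i]; last first.
  by apply/forallP => j; apply/implyP => Hi; rewrite H.
by have /forallP/(_ j)/implyP := H i; rewrite Hi => /(_ isT)/eqP.
Qed.

Lemma sum4 (F : 'I_4 -> k) : \sum_(l < 4) F l = F o0 + F o1 + F o2 + F o3.
Proof.
rewrite !big_ord_recr big_ord0 /= add0r.
by congr (_ + _ + _ + _); congr F; apply: val_inj.
Qed.

Lemma ord4 (i : 'I_4) : [\/ i = o0, i = o1, i = o2 | i = o3].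
Proof.
case: i => [[|[|[|[|n]]]] Hi].
- by constructor 1; apply: val_inj.
- by constructor 2; apply: val_inj.
- by constructor 3; apply: val_inj.
- by constructor 4; apply: val_inj.
- by [].
Qed.

Lemma mulE (M N : 'M[k]_4) : inD M -> inD N -> forall i j,
  (M * N) i j = if i == o0 then M o0 o0 * N o0 j + (j != o0)%:R * M o0 j * N o0 o0
                else (i == j)%:R * (M o0 o0 * N o0 o0).
Proof.
move=> /inDP hM /inDP hN i j.
rewrite -mulmxE mxE sum4.
have [] := ord4 i => ->; have [] := ord4 j => ->;
  rewrite ?[M o1 _]hM ?[M o2 _]hM ?[M o3 _]hM ?[N o1 _]hN ?[N o2 _]hN ?[N o3 _]hN //=; ring.
Qed.

Lemma inD1 : inD 1.
Proof.
apply/inDP => i j Hi; rewrite -idmxE !mxE eqxx mulr1 eq_sym.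
by case: (i == j).
Qed.

Lemma inD_lin a (M N : 'M[k]_4) : inD M -> inD N -> inD (a *: M + N).
Proof.
move=> /inDP hM /inDP hN; apply/inDP => i j Hi.
rewrite !mxE hM // hN //; ring.
Qed.

Lemma inD_mul (M N : 'M[k]_4) : inD M -> inD N -> inD (M * N).
Proof.
move=> hM hN; apply/inDP => i j Hi.
rewrite !mulE // (negbTE Hi) eqxx /=; ring.
Qed.

Lemma inD_d0 j : j != o0 -> inD (delta_mx o0 j).
Proof.
move=> Hj; apply/inDP => i l Hi; rewrite !mxE (negbTE Hi) eqxx /= [o0 == j]eq_sym (negbTE Hj).
by rewrite mulr0.
Qed.

Lemma M2d02 : M2 * delta_mx o0 o2 - delta_mx o0 o2 * M2 = delta_mx o0 o3 :> 'M[k]_4.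
Proof.
rewrite /M2 mulrBl mulrBr !dd /= !mulr0n !mulr1n.
by rewrite !(subrr, sub0r, subr0, opprK).
Qed.
End M.

Arguments inD {k}.
Arguments inD_d0 {k}.
Arguments mulE {k}.
Arguments M1 {k}.
Arguments M2 {k}.
Definition pb (P : Prop) : bool :=
  if ClassicalEpsilon.excluded_middle_informative P then true else false.
Lemma pbP (P : Prop) : pb P <-> P.
Proof. by rewrite /pb; case: ClassicalEpsilon.excluded_middle_informative. Qed.

Section IG.
Variables (k : fieldType) (A : algType k) (gens : seq A).
Lemma ig_gen x : x \in gens -> in_gen_subalg gens x.
Proof. by move=> hx P _ hs; exact: hs _ hx. Qed.
Lemma ig1 : in_gen_subalg gens 1.
Proof. by move=> P [h1 _ _]. Qed.
Lemma igL a x y : in_gen_subalg gens x -> in_gen_subalg gens y ->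
  in_gen_subalg gens (a *: x + y).
Proof. by move=> hx hy P hP hs; case: (hP) => _ hl _; apply: hl; [exact: hx | exact: hy]. Qed.
Lemma igM x y : in_gen_subalg gens x -> in_gen_subalg gens y ->
  in_gen_subalg gens (x * y).
Proof. by move=> hx hy P hP hs; case: (hP) => _ _ hm; apply: hm; [exact: hx | exact: hy]. Qed.
End IG.

Theorem mainTheorem18 (k : closedFieldType) (q : k)
  (char0 : [pchar k] =i pred0)
  (q_nz : q != 0)
  (q_not_root : forall n : nat, (0 < n)%N -> q ^+ n != 1)
  (A : algType k) (e1 e2 : A) (HU : is_Uplus q e1 e2) :
  ~ subalg_iso
      (in_gen_subalg [:: e2; wq q e1 e2; e3 q e1 e2])
      (in_gen_subalg [:: e1; e3bar q e1 e2; wbar q e1 e2]).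
Proof.
move=> [f [fST [finj [fsurj [f1 [flin fmul]]]]]].
case: HU => _ /(_ _ _ _ (@serreM _ q)) [[fA [fA1 fA2]] _].
pose g : A -> 'M[k]_4 := fun x => fA x.
have gZ : forall (a : k) x, g (a *: x) = a *: g x by move=> a x; exact: linearZZ.
have gM : forall x y, g (x * y) = g x * g y by move=> x y; exact: rmorphM.
have gD : forall x y, g (x + y) = g x + g y by move=> x y; exact: raddfD.
have gB : forall x y, g (x - y) = g x - g y by move=> x y; exact: raddfB.
have g1 : g 1 = 1 by exact: rmorph1.
have ge1 : g e1 = M1 by exact: fA1.
have ge2 : g e2 = M2 by exact: fA2.
set S := in_gen_subalg [:: e2; wq q e1 e2; e3 q e1 e2].
set T := in_gen_subalg [:: e1; e3bar q e1 e2; wbar q e1 e2].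
have fAF : g (e3bar q e1 e2) = delta_mx o0 o2.
  rewrite /e3bar gB; transitivity (g (e1 * e2) - q ^- 2 *: g (e2 * e1)).
    by congr (_ - _); exact: gZ.
  by rewrite !gM ge1 ge2 M1M2 M2M1 scaler0 subr0.
have fAV : g (wbar q e1 e2) = delta_mx o0 o3.
  by rewrite /wbar gB !gM fAF ge2 M2d02.
have hTD : forall y, T y -> inD (g y).
  move=> y hy; have := hy [pred z | inD (g z)]; apply.
    split; first by rewrite inE g1 inD1.
      by move=> a u v; rewrite !inE => hu hv; rewrite gD gZ inD_lin.
    by move=> u v; rewrite !inE => hu hv; rewrite gM inD_mul.
  move=> z; rewrite !inE => /or3P [] /eqP ->.
  - by rewrite ge1 inD_d0.
  - by rewrite fAF inD_d0.
  - by rewrite fAV inD_d0.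
pose psi u := g (f u).
have hSD : forall u, S u -> inD (psi u) by move=> u hu; apply: hTD; apply: fST.
have Se2 : S e2 by apply: ig_gen; rewrite !inE eqxx.
have SE : S (e3 q e1 e2) by apply: ig_gen; rewrite !inE eqxx !orbT.
set Y0 := psi e2. set E0 := psi (e3 q e1 e2).
pose Q u := S u /\ exists b c : k, forall j, j != o0 -> psi u o0 j = b * Y0 o0 j + c * E0 o0 j.
have hQ : forall u, S u -> Q u.
  move=> u hu; apply/pbP; apply: (hu [pred z | pb (Q z)]).
    split.
    - rewrite inE; apply/pbP; split; first exact: ig1.
      exists 0, 0 => j hj; rewrite /psi f1 g1 -idmxE mxE [o0 == j]eq_sym (negbTE hj) /=; ring.
    - move=> a x y; rewrite !inE => /pbP [hx [b1 [c1 h1]]] /pbP [hy [b2 [c2 h2]]].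
      apply/pbP; split; first exact: igL.
      exists (a * b1 + b2), (a * c1 + c2) => j hj.
      rewrite /psi flin // gD gZ !mxE -/(psi x) -/(psi y) (h1 j hj) (h2 j hj); ring.
    - move=> x y; rewrite !inE => /pbP [hx [b1 [c1 h1]]] /pbP [hy [b2 [c2 h2]]].
      apply/pbP; split; first exact: igM.
      exists (psi x o0 o0 * b2 + b1 * psi y o0 o0), (psi x o0 o0 * c2 + c1 * psi y o0 o0) => j hj.
      rewrite /psi fmul // gM -/(psi x) -/(psi y) mulE ?hSD // eqxx hj (h1 j hj) (h2 j hj) /=; ring.
  move=> z; rewrite !inE => /or3P [] /eqP ->; apply/pbP.
  - split=> //; exists 1, 0 => j hj; ring.
  - split; first by apply: ig_gen; rewrite !inE eqxx orbT.
    have fW : f (wq q e1 e2) = f e2 * f (e3 q e1 e2) - f (e3 q e1 e2) * f e2.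
      transitivity (f ((-1) *: (e3 q e1 e2 * e2) + e2 * e3 q e1 e2)).
        by congr f; rewrite /wq scaleN1r addrC.
      transitivity ((-1) *: f (e3 q e1 e2 * e2) + f (e2 * e3 q e1 e2)).
        by apply: flin; apply: igM.
      transitivity ((-1) *: (f (e3 q e1 e2) * f e2) + f e2 * f (e3 q e1 e2)).
        by congr (_ + _); [congr (_ *: _) |]; apply: fmul.
      by rewrite scaleN1r addrC.
    exists 0, 0 => j hj.
    rewrite /psi fW gB !gM.
    rewrite -/(psi e2) -/(psi (e3 q e1 e2)) -/Y0 -/E0.
    have hm1 := mulE Y0 E0 (hSD _ Se2) (hSD _ SE) o0 j.
    have hm2 := mulE E0 Y0 (hSD _ SE) (hSD _ Se2) o0 j.
    rewrite !mxE in hm1 hm2 *; rewrite hm1 hm2 eqxx hj /=; ring.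
  - split=> //; exists 0, 1 => j hj; ring.
have get : forall z, T z -> exists b c : k, forall j, j != o0 ->
    g z o0 j = b * Y0 o0 j + c * E0 o0 j.
  move=> z hz; have [u hu <-] := fsurj z hz.
  by have [_ H] := hQ u hu.
have [b1 [c1 h1]] := get e1 (@ig_gen _ _ _ _ (mem_head _ _)).
have mF : e3bar q e1 e2 \in [:: e1; e3bar q e1 e2; wbar q e1 e2] by rewrite !inE eqxx orbT.
have mV : wbar q e1 e2 \in [:: e1; e3bar q e1 e2; wbar q e1 e2] by rewrite !inE eqxx !orbT.
have [b2 [c2 h2]] := get (e3bar q e1 e2) (@ig_gen _ _ _ _ mF).
have [b3 [c3 h3]] := get (wbar q e1 e2) (@ig_gen _ _ _ _ mV).
rewrite ge1 in h1; rewrite fAF in h2; rewrite fAV in h3.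
have h11 := h1 o1 isT; have h12 := h1 o2 isT; have h13 := h1 o3 isT.
have h21 := h2 o1 isT; have h22 := h2 o2 isT; have h23 := h2 o3 isT.
have h31 := h3 o1 isT; have h32 := h3 o2 isT; have h33 := h3 o3 isT.
move: h11 h12 h13 h21 h22 h23 h31 h32 h33; rewrite !mxE /=.
set y1 := Y0 o0 o1; set y2 := Y0 o0 o2; set y3 := Y0 o0 o3.
set z1 := E0 o0 o1; set z2 := E0 o0 o2; set z3 := E0 o0 o3.
move=> h11 h12 h13 h21 h22 h23 h31 h32 h33.
have H : (b1*y1+c1*z1) * ((b2*y2+c2*z2)*(b3*y3+c3*z3) - (b2*y3+c2*z3)*(b3*y2+c3*z2))
  - (b1*y2+c1*z2) * ((b2*y1+c2*z1)*(b3*y3+c3*z3) - (b2*y3+c2*z3)*(b3*y1+c3*z1))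
  + (b1*y3+c1*z3) * ((b2*y1+c2*z1)*(b3*y2+c3*z2) - (b2*y2+c2*z2)*(b3*y1+c3*z1)) = 0 by ring.
rewrite -h11 -h12 -h13 -h21 -h22 -h23 -h31 -h32 -h33 in H.
move/eqP: H; rewrite !(mul0r, mulr0, mul1r, mulr1, subr0, sub0r, addr0, add0r).
by rewrite oner_eq0.
Qed.
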